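(* There exists a planar graph of girth 4 that does not belong to CBU.
   Context: Let $e_1,\ldots,e_d$ be the standard basis of $\mathbb{R}^d$. For $d\ge 1$, a graph belongs to $d$-CBU if one can assign to each vertex an axis-parallel box (product of $d$ closed intervals of positive length) in $\mathbb{R}^d$ such that the boxes have pairwise disjoint interiors, two distinct vertices are adjacent iff their boxes intersect, and any two intersecting boxes intersect in a $(d-1)$-dimensional box orthogonal to $e_1$. CBU denotes the union of the classes $d$-CBU over all $d\ge 1$. *)

(* Defs.v *)
From mathcomp Require Import all_boot.
From Stdlib Require Import Reals.

Set Implicit Arguments.
Unset Strict Implicit.
Unset Printing Implicit Defensive.

Definition simple_graph (n : nat) (adj : rel 'I_n) : Prop :=
  symmetric adj /\ irreflexive adj.

(* Girth 4: the shortest cycle has length 4.  A cycle of length k is a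
   duplicate-free sequence of k vertices, cyclically consecutive ones adjacent
   (path.cycle); graph cycles have length >= 3. *)
Definition girth4 (n : nat) (adj : rel 'I_n) : Prop :=
  (exists s : seq 'I_n, size s = 4%N /\ uniq s /\ cycle adj s) /\
  (forall s : seq 'I_n, uniq s -> cycle adj s -> leq 3 (size s) ->
     leq 4 (size s)).

Local Open Scope R_scope.

(* Arcs are given by two coordinate functions
   R -> R, continuous everywhere (harmless: any arc on [0,1] extends). *)
Definition planar (n : nat) (adj : rel 'I_n) : Prop :=
  exists (px py : 'I_n -> R) (gx gy : 'I_n -> 'I_n -> R -> R),
    (forall u v, px u = px v -> py u = py v -> u = v) /\
    (forall u v, adj u v -> ltn u v ->
       continuity (gx u v) /\ continuity (gy u v) /\
       gx u v 0 = px u /\ gy u v 0 = py u /\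
       gx u v 1 = px v /\ gy u v 1 = py v /\
       (forall s t, 0 <= s <= 1 -> 0 <= t <= 1 ->
          gx u v s = gx u v t -> gy u v s = gy u v t -> s = t) /\
       (forall w t, w <> u -> w <> v -> 0 <= t <= 1 ->
          ~ (gx u v t = px w /\ gy u v t = py w))) /\
    (forall u v u' v', adj u v -> ltn u v -> adj u' v' -> ltn u' v' ->
       (u, v) <> (u', v') ->
       forall s t, 0 < s < 1 -> 0 < t < 1 ->
         ~ (gx u v s = gx u' v' t /\ gy u v s = gy u' v' t)).

Definition in_box (d : nat) (lo hi x : 'I_d -> R) : Prop :=
  forall i, lo i <= x i <= hi i.
Definition in_box_interior (d : nat) (lo hi x : 'I_d -> R) : Prop :=
  forall i, lo i < x i < hi i.

(* d-CBU (coordinate 0 plays the role of e_1). *)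
Definition in_dCBU (d n : nat) (adj : rel 'I_n) : Prop :=
  exists lo hi : 'I_n -> 'I_d -> R,
    (forall v i, lo v i < hi v i) /\
    (forall u v, u <> v ->
       ~ (exists x, in_box_interior (lo u) (hi u) x /\
                    in_box_interior (lo v) (hi v) x)) /\
    (forall u v, u <> v ->
       (adj u v <-> exists x, in_box (lo u) (hi u) x /\ in_box (lo v) (hi v) x)) /\
    (forall u v, u <> v ->
       (exists x, in_box (lo u) (hi u) x /\ in_box (lo v) (hi v) x) ->
       exists (c : R) (a b : 'I_d -> R),
         (forall i : 'I_d, nat_of_ord i <> O -> a i < b i) /\
         (forall x, (in_box (lo u) (hi u) x /\ in_box (lo v) (hi v) x) <->
            (forall i : 'I_d, (nat_of_ord i = O -> x i = c) /\
                              (nat_of_ord i <> O -> a i <= x i <= b i)))).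

Definition in_CBU (n : nat) (adj : rel 'I_n) : Prop :=
  exists d : nat, leq 1 d /\ in_dCBU d adj.

(* Main.v *)
Require Import Defs.
From mathcomp Require Import all_boot.
From Stdlib Require Import Reals Lra.
From Stdlib Require List.
Set Implicit Arguments.
Unset Strict Implicit.

Definition El : list (nat * nat) :=
  (0,1)::(0,2)::(2,3)::(1,3)::(0,4)::(4,5)::(1,5)::(0,6)::(6,7)::(5,7)::(2,8)::(8,9)::(1,9)::(3,10)::(4,10)::nil.

Fixpoint memE (a b : nat) (l : list (nat*nat)) : bool :=
  match l with nil => false | (x,y)::l => ((a == x) && (b == y)) || memE a b l end.

Definition adjn (a b : nat) : bool := memE a b El || memE b a El.
Definition G : rel 'I_11 := fun u v => adjn u v.

Lemma G_sym : symmetric G.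
Proof. by move=> x y; rewrite /G /adjn orbC. Qed.

Lemma G_irr : irreflexive G.
Proof.
move=> [m Hm]; rewrite /G /=.
do 11 (destruct m as [|m]; [by [] |]); by [].
Qed.


Lemma notri_b : all (fun a => all (fun b => all (fun c => ~~ [&& adjn a b, adjn b c & adjn c a]) (iota 0 11)) (iota 0 11)) (iota 0 11).
Proof. vm_compute. reflexivity. Qed.

Lemma notri (a b c : 'I_11) : G a b -> G b c -> G c a -> False.
Proof.
move=> h1 h2 h3.
have H1 := allP notri_b a. rewrite mem_iota leq0n add0n ltn_ord in H1.
have H2 := allP (H1 isT) b. rewrite mem_iota leq0n add0n ltn_ord in H2.
have H3 := allP (H2 isT) c. rewrite mem_iota leq0n add0n ltn_ord in H3.
have := H3 isT.
by rewrite -/(G a b) -/(G b c) -/(G c a) h1 h2 h3.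
Qed.

Lemma edgeP (u v : 'I_11) : G u v -> (u < v)%N -> List.In (nat_of_ord u, nat_of_ord v) El.
Proof.
case: u => m Hm; case: v => k Hk /=.
do 11 (destruct m as [|m]; [ do 11 (destruct k as [|k]; [ rewrite /G /=; try by []; move=> _ _; simpl; repeat (first [left; reflexivity | right]) | ]); by [] | ]).
by [].
Qed.

Local Open Scope R_scope.

Definition pxn (k : nat) : R :=
  match k with 0%nat => 0 | 1%nat => 0 | 2%nat => -4 | 3%nat => -4 | 4%nat => 4 | 5%nat => 4
  | 6%nat => 2 | 7%nat => 3 | 8%nat => -3 | 9%nat => -2 | _ => 6 end.
Definition pyn (k : nat) : R :=
  match k with 0%nat => 0 | 1%nat => 4 | 2%nat => 0 | 3%nat => 4 | 4%nat => 0 | 5%nat => 4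
  | 6%nat => 1 | 7%nat => 2 | 8%nat => 2 | 9%nat => 3 | _ => 8 end.

Lemma lin_cont (a b : R) : continuity (fun t => a + t * (b - a)).
Proof.
apply: continuity_plus.
  by apply: continuity_const => x y.
apply: continuity_mult; first exact: derivable_continuous derivable_id.
by apply: continuity_const => x y.
Qed.

Lemma lin_inj (x0 x1 y0 y1 s t : R) : (x0 <> x1 \/ y0 <> y1) ->
  x0 + s * (x1 - x0) = x0 + t * (x1 - x0) -> y0 + s * (y1 - y0) = y0 + t * (y1 - y0) -> s = t.
Proof.
move=> H h1 h2.
have e1 : (s - t) * (x1 - x0) = 0 by lra.
have e2 : (s - t) * (y1 - y0) = 0 by lra.
case: H => H.
  case: (Rmult_integral _ _ e1) => h; lra.
case: (Rmult_integral _ _ e2) => h; lra.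
Qed.

Ltac inE_cases H :=
  repeat (let H' := fresh "Hc" in destruct H as [H'|H]; [ injection H' as <- <- | ]);
  try (destruct H).

Lemma edge_nat (a b : nat) : List.In (a,b) El ->
  (pxn a <> pxn b \/ pyn a <> pyn b) /\
  (forall w : nat, leq (S w) 11 -> w <> a -> w <> b -> forall t, 0 <= t <= 1 ->
     ~ (pxn a + t * (pxn b - pxn a) = pxn w /\ pyn a + t * (pyn b - pyn a) = pyn w)).
Proof.
move=> H; inE_cases H; (split; [ simpl; first [left; lra | right; lra] | ]);
  (move=> w Hw Hwa Hwb t Ht [h1 h2];
   do 11 (destruct w as [|w]; [ first [ by [] | simpl in h1, h2; lra ] | ]); by []).
Qed.

Lemma cross_nat (a b a' b' : nat) : List.In (a,b) El -> List.In (a',b') El -> (a,b) <> (a',b') ->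
  forall s t, 0 < s < 1 -> 0 < t < 1 ->
  ~ (pxn a + s * (pxn b - pxn a) = pxn a' + t * (pxn b' - pxn a') /\
     pyn a + s * (pyn b - pyn a) = pyn a' + t * (pyn b' - pyn a')).
Proof.
move=> H H' Hne s t Hs Ht [h1 h2].
inE_cases H; inE_cases H'; first [ by apply: Hne | simpl in h1, h2; lra ].
Qed.

Lemma G_planar : planar G.
Proof.
exists (fun u => pxn u), (fun u => pyn u),
  (fun u v t => pxn u + t * (pxn v - pxn u)), (fun u v t => pyn u + t * (pyn v - pyn u)).
split; [| split].
- move=> [m Hm] [k Hk] /= h1 h2.
  do 11 (destruct m as [|m]; [ do 11 (destruct k as [|k]; [ first [ by apply: val_inj | simpl in h1, h2; lra ] | ]); by [] | ]); by [].
- move=> u v Huv Hlt.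
  have Hin := edgeP Huv Hlt.
  have [Hne Hav] := edge_nat Hin.
  split; first exact: lin_cont.
  split; first exact: lin_cont.
  do 4 (split; first (simpl; ring)).
  split.
    move=> s t _ _ h1 h2; exact: lin_inj Hne h1 h2.
  move=> w t Hwu Hwv Ht; apply: (Hav (nat_of_ord w) (ltn_ord w)).
  + by move=> e; apply: Hwu; apply: ord_inj.
  + by move=> e; apply: Hwv; apply: ord_inj.
  + exact: Ht.
- move=> u v u' v' H1 H2 H3 H4 Hne s t Hs Ht.
  apply: (cross_nat (edgeP H1 H2) (edgeP H3 H4)) => //.
  move=> [e1 e2]; apply: Hne.
  by rewrite (ord_inj e1) (ord_inj e2).
Qed.

Lemma maxmin (lu hu lv hv x : R) : lu <= x <= hu -> lv <= x <= hv ->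
  (lu <= Rmax lu lv <= hu /\ lv <= Rmax lu lv <= hv) /\
  (lu <= Rmin hu hv <= hu /\ lv <= Rmin hu hv <= hv).
Proof. move=> h1 h2; unfold Rmax, Rmin; do 2 destruct Rle_dec; lra. Qed.

Lemma maxmin_eq (lu hu lv hv : R) : lu < hu -> lv < hv -> Rmax lu lv = Rmin hu hv ->
  hu = lv \/ hv = lu.
Proof. move=> h1 h2; unfold Rmax, Rmin; do 2 destruct Rle_dec; lra. Qed.

Definition v0 : 'I_11 := @Ordinal 11 0 isT.
Definition v1 : 'I_11 := @Ordinal 11 1 isT.
Definition v2 : 'I_11 := @Ordinal 11 2 isT.
Definition v3 : 'I_11 := @Ordinal 11 3 isT.
Definition v4 : 'I_11 := @Ordinal 11 4 isT.
Definition v5 : 'I_11 := @Ordinal 11 5 isT.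
Definition v6 : 'I_11 := @Ordinal 11 6 isT.
Definition v7 : 'I_11 := @Ordinal 11 7 isT.
Definition v8 : 'I_11 := @Ordinal 11 8 isT.
Definition v9 : 'I_11 := @Ordinal 11 9 isT.
Definition v10 : 'I_11 := @Ordinal 11 10 isT.

Lemma neq_ord (a b : 'I_11) : nat_of_ord a != nat_of_ord b -> a <> b.
Proof. by move=> /eqP h e; apply: h; rewrite e. Qed.

Lemma notCBU : ~ in_CBU G.
Proof.
move=> [d [Hd [lo [hi [Hlt [Hint [Hadj Hshape]]]]]]].
pose i0 : 'I_d := Ordinal Hd.
have key : forall u v : 'I_11, u <> v -> G u v -> hi u i0 = lo v i0 \/ hi v i0 = lo u i0.
{ move=> u v Huv Guv.
  have [x [xu xv]] := proj1 (Hadj u v Huv) Guv.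
  have [c [a [b [Hab Hsh]]]] := Hshape u v Huv (ex_intro _ x (conj xu xv)).
  have [[m1u m1v] [m2u m2v]] := maxmin (xu i0) (xv i0).
  have iny : forall y : 'I_d -> R, (forall i, i != i0 -> y i = x i) ->
      lo u i0 <= y i0 <= hi u i0 -> lo v i0 <= y i0 <= hi v i0 ->
      in_box (lo u) (hi u) y /\ in_box (lo v) (hi v) y.
  { move=> y Hy h1 h2; split=> i; case: (eqVneq i i0) => [->|ne] //; rewrite ?Hy //; try (by apply: xu); try (by apply: xv). }
  pose y1 := fun i => if i == i0 then Rmax (lo u i0) (lo v i0) else x i.
  pose y2 := fun i => if i == i0 then Rmin (hi u i0) (hi v i0) else x i.
  have Y1 : y1 i0 = Rmax (lo u i0) (lo v i0) by rewrite /y1 eqxx.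
  have Y2 : y2 i0 = Rmin (hi u i0) (hi v i0) by rewrite /y2 eqxx.
  have in1 : in_box (lo u) (hi u) y1 /\ in_box (lo v) (hi v) y1.
    by apply: iny; [move=> i /negbTE ne; rewrite /y1 ne | rewrite Y1 | rewrite Y1].
  have in2 : in_box (lo u) (hi u) y2 /\ in_box (lo v) (hi v) y2.
    by apply: iny; [move=> i /negbTE ne; rewrite /y2 ne | rewrite Y2 | rewrite Y2].
  have c1 := (proj1 ((proj1 (Hsh y1) in1) i0)) erefl.
  have c2 := (proj1 ((proj1 (Hsh y2) in2) i0)) erefl.
  apply: maxmin_eq; [exact: Hlt | exact: Hlt | ].
  by rewrite -Y1 -Y2 c1 c2. }
have P0 := Hlt v0 i0.
have P1 := Hlt v1 i0.
have P2 := Hlt v2 i0.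
have P3 := Hlt v3 i0.
have P4 := Hlt v4 i0.
have P5 := Hlt v5 i0.
have P6 := Hlt v6 i0.
have P7 := Hlt v7 i0.
have P8 := Hlt v8 i0.
have P9 := Hlt v9 i0.
have P10 := Hlt v10 i0.
have key0 := key v0 v1 (@neq_ord v0 v1 isT) isT.
have key1 := key v0 v2 (@neq_ord v0 v2 isT) isT.
have key2 := key v2 v3 (@neq_ord v2 v3 isT) isT.
have key3 := key v1 v3 (@neq_ord v1 v3 isT) isT.
have key4 := key v0 v4 (@neq_ord v0 v4 isT) isT.
have key5 := key v4 v5 (@neq_ord v4 v5 isT) isT.
have key6 := key v1 v5 (@neq_ord v1 v5 isT) isT.
have key7 := key v0 v6 (@neq_ord v0 v6 isT) isT.
have key8 := key v6 v7 (@neq_ord v6 v7 isT) isT.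
have key9 := key v5 v7 (@neq_ord v5 v7 isT) isT.
have key10 := key v2 v8 (@neq_ord v2 v8 isT) isT.
have key11 := key v8 v9 (@neq_ord v8 v9 isT) isT.
have key12 := key v1 v9 (@neq_ord v1 v9 isT) isT.
have key13 := key v3 v10 (@neq_ord v3 v10 isT) isT.
have key14 := key v4 v10 (@neq_ord v4 v10 isT) isT.
case: key0 => E0; [ (case: key1 => E1; [ (case: key2 => E2; [ (case: key3 => E3; [ (case: key4 => E4; [ (case: key5 => E5; [ (case: key6 => E6; [ (case: key7 => E7; [ (case: key8 => E8; [ (case: key9 => E9; [ (case: key10 => E10; [ (case: key11 => E11; [ (case: key12 => E12; [ lra | lra ]) | (case: key12 => E12; [ lra | lra ]) ]) | (case: key11 => E11; [ (case: key12 => E12; [ lra | lra ]) | (case: key12 => E12; [ lra | lra ]) ]) ]) | (case: key10 => E10; [ (case: key11 => E11; [ (case: key12 => E12; [ lra | lra ]) | (case: key12 => E12; [ lra | lra ]) ]) | (case: key11 => E11; [ (case: key12 => E12; [ lra | lra ]) | (case: key12 => E12; [ lra | lra ]) ]) ]) ]) | (case: key9 => E9; [ lra | lra ]) ]) | (case: key8 => E8; [ (case: key9 => E9; [ lra | (case: key10 => E10; [ (case: key11 => E11; [ (case: key12 => E12; [ lra | lra ]) | (case: key12 => E12; [ lra | lra ]) ]) | (case: key11 => E11; [ (case: key12 => E12; [ lra | lra ]) | (case: key12 => E12; [ lra | lra ]) ]) ]) ]) | (case: key9 => E9; [ lra | lra ]) ]) ]) | lra ]) | (case: key6 => E6; [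 lra | (case: key7 => E7; [ (case: key8 => E8; [ (case: key9 => E9; [ lra | lra ]) | (case: key9 => E9; [ lra | lra ]) ]) | (case: key8 => E8; [ (case: key9 => E9; [ lra | (case: key10 => E10; [ (case: key11 => E11; [ (case: key12 => E12; [ lra | lra ]) | (case: key12 => E12; [ lra | lra ]) ]) | (case: key11 => E11; [ (case: key12 => E12; [ lra | lra ]) | (case: key12 => E12; [ lra | lra ]) ]) ]) ]) | (case: key9 => E9; [ lra | (case: key10 => E10; [ (case: key11 => E11; [ (case: key12 => E12; [ lra | lra ]) | (case: key12 => E12; [ lra | lra ]) ]) | (case: key11 => E11; [ (case: key12 => E12; [ lra | lra ]) | (case: key12 => E12; [ lra | lra ]) ]) ]) ]) ]) ]) ]) ]) | (case: key5 => E5; [ (case: key6 => E6; [ lra | (case: key7 => E7; [ (case: key8 => E8; [ (case: key9 => E9; [ lra | lra ]) | (case: key9 => E9; [ lra | lra ]) ]) | (case: key8 => E8; [ (case: key9 => E9; [ lra | lra ]) | (case: key9 => E9; [ lra | lra ]) ]) ]) ]) | (case: key6 => E6; [ lra | lra ]) ]) ]) | lra ]) | (case: key3 => E3; [ lra | (case: key4 => E4; [ (case: key5 => E5; [ (case: key6 => E6; [ (case: key7 => E7; [ (case: key8 => E8; [ (case: key9 => E9; [ (case: key10 => E10; [ (case: key11 => E11; [ (case: key12 => E12; [ (case: key13 => E13; [ (case: key14 => E14; [ lra | lra ]) | (case: key14 => E14; [ lra | lra ]) ]) | lra ]) | (case: key12 => E12; [ (case: key13 => E13; [ (case: key14 =>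 E14; [ lra | lra ]) | (case: key14 => E14; [ lra | lra ]) ]) | lra ]) ]) | (case: key11 => E11; [ (case: key12 => E12; [ lra | lra ]) | (case: key12 => E12; [ lra | lra ]) ]) ]) | (case: key10 => E10; [ (case: key11 => E11; [ (case: key12 => E12; [ (case: key13 => E13; [ (case: key14 => E14; [ lra | lra ]) | (case: key14 => E14; [ lra | lra ]) ]) | lra ]) | (case: key12 => E12; [ (case: key13 => E13; [ (case: key14 => E14; [ lra | lra ]) | (case: key14 => E14; [ lra | lra ]) ]) | lra ]) ]) | (case: key11 => E11; [ (case: key12 => E12; [ lra | lra ]) | (case: key12 => E12; [ lra | lra ]) ]) ]) ]) | (case: key9 => E9; [ lra | lra ]) ]) | (case: key8 => E8; [ (case: key9 => E9; [ lra | (case: key10 => E10; [ (case: key11 => E11; [ (case: key12 => E12; [ (case: key13 => E13; [ (case: key14 => E14; [ lra | lra ]) | (case: key14 => E14; [ lra | lra ]) ]) | lra ]) | (case: key12 => E12; [ (case: key13 => E13; [ (case: key14 => E14; [ lra | lra ]) | (case: key14 => E14; [ lra | lra ]) ]) | lra ]) ]) | (case: key11 => E11; [ (case: key12 => E12; [ lra | lra ]) | (case: key12 => E12; [ lra | lra ]) ]) ]) ]) | (case: key9 => E9; [ lra | lra ]) ]) ]) | lra ]) | (case: key6 => E6; [ lra | (case: key7 => E7; [ (case: key8 => E8; [ (case: key9 => E9; [ lra | lra ]) | (case: key9 => E9; [ lra | lra ]) ]) | (case: key8 => E8; [ (case: key9 => E9; [ lra | (case: key10 => E10; [ (case: key11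 => E11; [ (case: key12 => E12; [ (case: key13 => E13; [ (case: key14 => E14; [ lra | lra ]) | (case: key14 => E14; [ lra | lra ]) ]) | lra ]) | (case: key12 => E12; [ (case: key13 => E13; [ (case: key14 => E14; [ lra | lra ]) | (case: key14 => E14; [ lra | lra ]) ]) | lra ]) ]) | (case: key11 => E11; [ (case: key12 => E12; [ lra | lra ]) | (case: key12 => E12; [ lra | lra ]) ]) ]) ]) | (case: key9 => E9; [ lra | (case: key10 => E10; [ (case: key11 => E11; [ (case: key12 => E12; [ (case: key13 => E13; [ (case: key14 => E14; [ lra | lra ]) | (case: key14 => E14; [ lra | lra ]) ]) | lra ]) | (case: key12 => E12; [ (case: key13 => E13; [ (case: key14 => E14; [ lra | lra ]) | (case: key14 => E14; [ lra | lra ]) ]) | lra ]) ]) | (case: key11 => E11; [ (case: key12 => E12; [ lra | lra ]) | (case: key12 => E12; [ lra | lra ]) ]) ]) ]) ]) ]) ]) ]) | (case: key5 => E5; [ (case: key6 => E6; [ lra | (case: key7 => E7; [ (case: key8 => E8; [ (case: key9 => E9; [ lra | lra ]) | (case: key9 => E9; [ lra | lra ]) ]) | (case: key8 => E8; [ (case: key9 => E9; [ lra | lra ]) | (case: key9 => E9; [ lra | lra ]) ]) ]) ]) | (case: key6 => E6; [ lra | lra ]) ]) ]) ]) ]) | (case: key2 => E2; [ (case: key3 => E3; [ lra | (case: key4 => E4; [ (case: key5 => E5; [ (case: key6 => E6; [ (case: key7 => E7; [ (case: key8 => E8; [ (case: key9 => E9; [ (case: key10 => E10; [ (case: key11 =>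 E11; [ (case: key12 => E12; [ (case: key13 => E13; [ (case: key14 => E14; [ lra | lra ]) | (case: key14 => E14; [ lra | lra ]) ]) | (case: key13 => E13; [ (case: key14 => E14; [ lra | lra ]) | (case: key14 => E14; [ lra | lra ]) ]) ]) | (case: key12 => E12; [ lra | lra ]) ]) | (case: key11 => E11; [ (case: key12 => E12; [ lra | (case: key13 => E13; [ (case: key14 => E14; [ lra | lra ]) | (case: key14 => E14; [ lra | lra ]) ]) ]) | (case: key12 => E12; [ lra | lra ]) ]) ]) | (case: key10 => E10; [ (case: key11 => E11; [ (case: key12 => E12; [ (case: key13 => E13; [ (case: key14 => E14; [ lra | lra ]) | (case: key14 => E14; [ lra | lra ]) ]) | (case: key13 => E13; [ (case: key14 => E14; [ lra | lra ]) | (case: key14 => E14; [ lra | lra ]) ]) ]) | (case: key12 => E12; [ lra | lra ]) ]) | (case: key11 => E11; [ (case: key12 => E12; [ lra | (case: key13 => E13; [ (case: key14 => E14; [ lra | lra ]) | (case: key14 => E14; [ lra | lra ]) ]) ]) | (case: key12 => E12; [ lra | lra ]) ]) ]) ]) | (case: key9 => E9; [ lra | lra ]) ]) | (case: key8 => E8; [ (case: key9 => E9; [ lra | (case: key10 => E10; [ (case: key11 => E11; [ (case: key12 => E12; [ (case: key13 => E13; [ (case: key14 => E14; [ lra | lra ]) | (case: key14 => E14; [ lra | lra ]) ]) | (case: key13 => E13; [ (case: key14 => E14; [ lra | lra ]) | (case: key14 => E14; [ lra | lra ]) ]) ]) | (case: key12 => E12; [ lra | lra ]) ]) | (case: key11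 => E11; [ (case: key12 => E12; [ lra | (case: key13 => E13; [ (case: key14 => E14; [ lra | lra ]) | (case: key14 => E14; [ lra | lra ]) ]) ]) | (case: key12 => E12; [ lra | lra ]) ]) ]) ]) | (case: key9 => E9; [ lra | lra ]) ]) ]) | lra ]) | (case: key6 => E6; [ lra | (case: key7 => E7; [ (case: key8 => E8; [ (case: key9 => E9; [ lra | lra ]) | (case: key9 => E9; [ lra | lra ]) ]) | (case: key8 => E8; [ (case: key9 => E9; [ lra | (case: key10 => E10; [ (case: key11 => E11; [ (case: key12 => E12; [ (case: key13 => E13; [ (case: key14 => E14; [ lra | lra ]) | (case: key14 => E14; [ lra | lra ]) ]) | (case: key13 => E13; [ (case: key14 => E14; [ lra | lra ]) | (case: key14 => E14; [ lra | lra ]) ]) ]) | (case: key12 => E12; [ lra | lra ]) ]) | (case: key11 => E11; [ (case: key12 => E12; [ lra | (case: key13 => E13; [ (case: key14 => E14; [ lra | lra ]) | (case: key14 => E14; [ lra | lra ]) ]) ]) | (case: key12 => E12; [ lra | lra ]) ]) ]) ]) | (case: key9 => E9; [ lra | (case: key10 => E10; [ (case: key11 => E11; [ (case: key12 => E12; [ (case: key13 => E13; [ (case: key14 => E14; [ lra | lra ]) | (case: key14 => E14; [ lra | lra ]) ]) | (case: key13 => E13; [ (case: key14 => E14; [ lra | lra ]) | (case: key14 => E14; [ lra | lra ]) ]) ]) | (case: key12 => E12; [ lra | lra ]) ]) | (case: key11 => E11; [ (case: key12 => E12; [ lra | (case: key13 => E13; [ (case: key14 => E14; [ lra | lra ])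 | (case: key14 => E14; [ lra | lra ]) ]) ]) | (case: key12 => E12; [ lra | lra ]) ]) ]) ]) ]) ]) ]) ]) | (case: key5 => E5; [ (case: key6 => E6; [ lra | (case: key7 => E7; [ (case: key8 => E8; [ (case: key9 => E9; [ lra | lra ]) | (case: key9 => E9; [ lra | lra ]) ]) | (case: key8 => E8; [ (case: key9 => E9; [ lra | lra ]) | (case: key9 => E9; [ lra | lra ]) ]) ]) ]) | (case: key6 => E6; [ lra | lra ]) ]) ]) ]) | (case: key3 => E3; [ lra | lra ]) ]) ]) | (case: key1 => E1; [ (case: key2 => E2; [ (case: key3 => E3; [ lra | lra ]) | (case: key3 => E3; [ (case: key4 => E4; [ (case: key5 => E5; [ (case: key6 => E6; [ lra | lra ]) | (case: key6 => E6; [ (case: key7 => E7; [ (case: key8 => E8; [ (case: key9 => E9; [ lra | lra ]) | (case: key9 => E9; [ lra | lra ]) ]) | (case: key8 => E8; [ (case: key9 => E9; [ lra | lra ]) | (case: key9 => E9; [ lra | lra ]) ]) ]) | lra ]) ]) | (case: key5 => E5; [ (case: key6 => E6; [ (case: key7 => E7; [ (case: key8 => E8; [ (case: key9 => E9; [ (case: key10 => E10; [ (case: key11 => E11; [ (case: key12 => E12; [ lra | lra ]) | (case: key12 => E12; [ (case: key13 => E13; [ (case: key14 => E14; [ lra | lra ]) | (case: key14 => E14; [ lra | lra ]) ]) | lra ]) ]) | (case: key11 => E11; [ (case: key12 => E12; [ lra | lra ]) | (case: key12 => E12; [ (case: key13 => E13; [ (case: key14 => E14; [ lra | lra ]) |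 (case: key14 => E14; [ lra | lra ]) ]) | (case: key13 => E13; [ (case: key14 => E14; [ lra | lra ]) | (case: key14 => E14; [ lra | lra ]) ]) ]) ]) ]) | lra ]) | (case: key9 => E9; [ (case: key10 => E10; [ (case: key11 => E11; [ (case: key12 => E12; [ lra | lra ]) | (case: key12 => E12; [ (case: key13 => E13; [ (case: key14 => E14; [ lra | lra ]) | (case: key14 => E14; [ lra | lra ]) ]) | lra ]) ]) | (case: key11 => E11; [ (case: key12 => E12; [ lra | lra ]) | (case: key12 => E12; [ (case: key13 => E13; [ (case: key14 => E14; [ lra | lra ]) | (case: key14 => E14; [ lra | lra ]) ]) | (case: key13 => E13; [ (case: key14 => E14; [ lra | lra ]) | (case: key14 => E14; [ lra | lra ]) ]) ]) ]) ]) | lra ]) ]) | (case: key8 => E8; [ (case: key9 => E9; [ lra | lra ]) | (case: key9 => E9; [ lra | lra ]) ]) ]) | lra ]) | (case: key6 => E6; [ lra | (case: key7 => E7; [ (case: key8 => E8; [ (case: key9 => E9; [ lra | lra ]) | (case: key9 => E9; [ (case: key10 => E10; [ (case: key11 => E11; [ (case: key12 => E12; [ lra | lra ]) | (case: key12 => E12; [ (case: key13 => E13; [ (case: key14 => E14; [ lra | lra ]) | (case: key14 => E14; [ lra | lra ]) ]) | lra ]) ]) | (case: key11 => E11; [ (case: key12 => E12; [ lra | lra ]) | (case: key12 => E12; [ (case: key13 => E13; [ (case: key14 => E14; [ lra | lra ]) | (case: key14 => E14; [ lra | lra ]) ]) | (case: key13 => E13; [ (case: key14 => E14; [ lra | lra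 ]) | (case: key14 => E14; [ lra | lra ]) ]) ]) ]) ]) | lra ]) ]) | (case: key8 => E8; [ (case: key9 => E9; [ lra | lra ]) | (case: key9 => E9; [ (case: key10 => E10; [ (case: key11 => E11; [ (case: key12 => E12; [ lra | lra ]) | (case: key12 => E12; [ (case: key13 => E13; [ (case: key14 => E14; [ lra | lra ]) | (case: key14 => E14; [ lra | lra ]) ]) | lra ]) ]) | (case: key11 => E11; [ (case: key12 => E12; [ lra | lra ]) | (case: key12 => E12; [ (case: key13 => E13; [ (case: key14 => E14; [ lra | lra ]) | (case: key14 => E14; [ lra | lra ]) ]) | (case: key13 => E13; [ (case: key14 => E14; [ lra | lra ]) | (case: key14 => E14; [ lra | lra ]) ]) ]) ]) ]) | (case: key10 => E10; [ (case: key11 => E11; [ (case: key12 => E12; [ lra | lra ]) | (case: key12 => E12; [ (case: key13 => E13; [ (case: key14 => E14; [ lra | lra ]) | (case: key14 => E14; [ lra | lra ]) ]) | lra ]) ]) | (case: key11 => E11; [ (case: key12 => E12; [ lra | lra ]) | (case: key12 => E12; [ (case: key13 => E13; [ (case: key14 => E14; [ lra | lra ]) | (case: key14 => E14; [ lra | lra ]) ]) | (case: key13 => E13; [ (case: key14 => E14; [ lra | lra ]) | (case: key14 => E14; [ lra | lra ]) ]) ]) ]) ]) ]) ]) ]) ]) ]) ]) | lra ]) ]) | (case: key2 => E2; [ (case: key3 => E3; [ (case: key4 => E4; [ (case: key5 => E5; [ (case: key6 => E6; [ lra | lra ]) | (case: key6 => E6; [ (case: key7 => E7; [ (case: key8 =>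 E8; [ (case: key9 => E9; [ lra | lra ]) | (case: key9 => E9; [ lra | lra ]) ]) | (case: key8 => E8; [ (case: key9 => E9; [ lra | lra ]) | (case: key9 => E9; [ lra | lra ]) ]) ]) | lra ]) ]) | (case: key5 => E5; [ (case: key6 => E6; [ (case: key7 => E7; [ (case: key8 => E8; [ (case: key9 => E9; [ (case: key10 => E10; [ (case: key11 => E11; [ (case: key12 => E12; [ lra | lra ]) | (case: key12 => E12; [ lra | lra ]) ]) | (case: key11 => E11; [ (case: key12 => E12; [ lra | (case: key13 => E13; [ (case: key14 => E14; [ lra | lra ]) | (case: key14 => E14; [ lra | lra ]) ]) ]) | (case: key12 => E12; [ lra | (case: key13 => E13; [ (case: key14 => E14; [ lra | lra ]) | (case: key14 => E14; [ lra | lra ]) ]) ]) ]) ]) | lra ]) | (case: key9 => E9; [ (case: key10 => E10; [ (case: key11 => E11; [ (case: key12 => E12; [ lra | lra ]) | (case: key12 => E12; [ lra | lra ]) ]) | (case: key11 => E11; [ (case: key12 => E12; [ lra | (case: key13 => E13; [ (case: key14 => E14; [ lra | lra ]) | (case: key14 => E14; [ lra | lra ]) ]) ]) | (case: key12 => E12; [ lra | (case: key13 => E13; [ (case: key14 => E14; [ lra | lra ]) | (case: key14 => E14; [ lra | lra ]) ]) ]) ]) ]) | lra ]) ]) | (case: key8 => E8; [ (case: key9 => E9; [ lra | lra ]) | (case: key9 => E9; [ lra | lra ]) ]) ]) | lra ]) | (case: key6 => E6; [ lra | (case: key7 => E7; [ (case: key8 => E8; [ (case: key9 => E9; [ lra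 | lra ]) | (case: key9 => E9; [ (case: key10 => E10; [ (case: key11 => E11; [ (case: key12 => E12; [ lra | lra ]) | (case: key12 => E12; [ lra | lra ]) ]) | (case: key11 => E11; [ (case: key12 => E12; [ lra | (case: key13 => E13; [ (case: key14 => E14; [ lra | lra ]) | (case: key14 => E14; [ lra | lra ]) ]) ]) | (case: key12 => E12; [ lra | (case: key13 => E13; [ (case: key14 => E14; [ lra | lra ]) | (case: key14 => E14; [ lra | lra ]) ]) ]) ]) ]) | lra ]) ]) | (case: key8 => E8; [ (case: key9 => E9; [ lra | lra ]) | (case: key9 => E9; [ (case: key10 => E10; [ (case: key11 => E11; [ (case: key12 => E12; [ lra | lra ]) | (case: key12 => E12; [ lra | lra ]) ]) | (case: key11 => E11; [ (case: key12 => E12; [ lra | (case: key13 => E13; [ (case: key14 => E14; [ lra | lra ]) | (case: key14 => E14; [ lra | lra ]) ]) ]) | (case: key12 => E12; [ lra | (case: key13 => E13; [ (case: key14 => E14; [ lra | lra ]) | (case: key14 => E14; [ lra | lra ]) ]) ]) ]) ]) | (case: key10 => E10; [ (case: key11 => E11; [ (case: key12 => E12; [ lra | lra ]) | (case: key12 => E12; [ lra | lra ]) ]) | (case: key11 => E11; [ (case: key12 => E12; [ lra | (case: key13 => E13; [ (case: key14 => E14; [ lra | lra ]) | (case: key14 => E14; [ lra | lra ]) ]) ]) | (case: key12 => E12; [ lra | (case: key13 => E13; [ (case: key14 => E14; [ lra | lra ]) | (case: key14 => E14; [ lra | lra ]) ]) ]) ]) ]) ]) ]) ]) ]) ]) ])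 | lra ]) | (case: key3 => E3; [ lra | (case: key4 => E4; [ (case: key5 => E5; [ (case: key6 => E6; [ lra | lra ]) | (case: key6 => E6; [ (case: key7 => E7; [ (case: key8 => E8; [ (case: key9 => E9; [ lra | lra ]) | (case: key9 => E9; [ lra | lra ]) ]) | (case: key8 => E8; [ (case: key9 => E9; [ lra | lra ]) | (case: key9 => E9; [ lra | lra ]) ]) ]) | lra ]) ]) | (case: key5 => E5; [ (case: key6 => E6; [ (case: key7 => E7; [ (case: key8 => E8; [ (case: key9 => E9; [ (case: key10 => E10; [ (case: key11 => E11; [ (case: key12 => E12; [ lra | lra ]) | (case: key12 => E12; [ lra | lra ]) ]) | (case: key11 => E11; [ (case: key12 => E12; [ lra | lra ]) | (case: key12 => E12; [ lra | lra ]) ]) ]) | lra ]) | (case: key9 => E9; [ (case: key10 => E10; [ (case: key11 => E11; [ (case: key12 => E12; [ lra | lra ]) | (case: key12 => E12; [ lra | lra ]) ]) | (case: key11 => E11; [ (case: key12 => E12; [ lra | lra ]) | (case: key12 => E12; [ lra | lra ]) ]) ]) | lra ]) ]) | (case: key8 => E8; [ (case: key9 => E9; [ lra | lra ]) | (case: key9 => E9; [ lra | lra ]) ]) ]) | lra ]) | (case: key6 => E6; [ lra | (case: key7 => E7; [ (case: key8 => E8; [ (case: key9 => E9; [ lra | lra ]) | (case: key9 => E9; [ (case: key10 => E10; [ (case: key11 => E11; [ (case: key12 => E12; [ lra | lra ]) | (case: key12 => E12; [ lra | lra ]) ]) | (case: key11 => E11; [ (case: key12 => E12; [ lra | lra ])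 | (case: key12 => E12; [ lra | lra ]) ]) ]) | lra ]) ]) | (case: key8 => E8; [ (case: key9 => E9; [ lra | lra ]) | (case: key9 => E9; [ (case: key10 => E10; [ (case: key11 => E11; [ (case: key12 => E12; [ lra | lra ]) | (case: key12 => E12; [ lra | lra ]) ]) | (case: key11 => E11; [ (case: key12 => E12; [ lra | lra ]) | (case: key12 => E12; [ lra | lra ]) ]) ]) | (case: key10 => E10; [ (case: key11 => E11; [ (case: key12 => E12; [ lra | lra ]) | (case: key12 => E12; [ lra | lra ]) ]) | (case: key11 => E11; [ (case: key12 => E12; [ lra | lra ]) | (case: key12 => E12; [ lra | lra ]) ]) ]) ]) ]) ]) ]) ]) ]) ]) ]) ]) ].
Qed.

Lemma G_girth4 : girth4 G.
Proof.
split.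
  exists [:: v0; v2; v3; v1]; split; first by []; split; by [].
move=> s Hu Hc H3.
case: s Hu Hc H3 => [|a [|b [|c [|e s]]]] //= Hu Hc _.
exfalso.
move/andP: Hc => [h1 /andP [h2 /andP [h3 _]]].
exact: notri h1 h2 h3.
Qed.

Theorem mainTheorem6 :
  exists (n : nat) (adj : rel 'I_n),
    simple_graph adj /\ planar adj /\ girth4 adj /\ ~ in_CBU adj.
Proof.
exists 11%nat, G.
split; first by split; [exact: G_sym | exact: G_irr].
split; first exact: G_planar.
split; first exact: G_girth4.
exact: notCBU.
Qed.
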